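(* Let $T>0$, $\mathbb{U}\subset\mathbb{R}^m$ compact non-empty, and $f:[0,T]\times\mathbb{R}^n\times\mathbb{U}\to\mathbb{R}^n$ continuous and Lipschitz in $x$ uniformly in $(s,u)$. Let $\overline{v}\in C([0,T]\times\mathbb{R}^n;\mathbb{R})$ be a viscosity supersolution of $-v_t+H(t,x,\nabla v)=0$ on $\Omega=\{(t,x)\in(0,T)\times\mathbb{R}^n\,|\,\overline{v}(t,x)<0\}$. Then $\overline{v}^\times(t,x):=\min\{\overline{v}(t,x),0\}$ belongs to $C([0,T]\times\mathbb{R}^n;\mathbb{R})$, is a viscosity supersolution of $-v_t+H(t,x,\nabla v)=0$ on $\Omega=(0,T)\times\mathbb{R}^n$, and satisfies $\overline{v}^\times(T,x)=\min\{\overline{v}(T,x),0\}$ for all $x\in\mathbb{R}^n$.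
   Context: The Hamiltonian is $H(t,x,p)=\max_{u\in\mathbb{U}}\langle -p,f(t,x,u)\rangle$. For an open set $\Omega\subseteq(0,T)\times\mathbb{R}^n$, a function $v\in C([0,T]\times\mathbb{R}^n;\mathbb{R})$ is a viscosity supersolution (resp. subsolution) of $-v_t+H(t,x,\nabla v)=0$ on $\Omega$ if for every $\xi\in C^1(\Omega;\mathbb{R})$ such that $v-\xi$ attains a local minimum (resp. local maximum) at $(t_0,x_0)\in\Omega$, one has $-\xi_t(t_0,x_0)+H(t_0,x_0,\nabla\xi(t_0,x_0))\ge 0$ (resp. $\le 0$). *)

(* Defs.v *)
From HB Require Import structures.
From mathcomp Require Import all_boot all_order all_algebra.
From mathcomp Require Import all_classical all_reals all_analysis.
Set Implicit Arguments. Unset Strict Implicit. Unset Printing Implicit Defensive.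
Import Order.TTheory GRing.Theory Num.Theory.
Import numFieldNormedType.Exports.
Local Open Scope classical_set_scope.
Local Open Scope ring_scope.

Definition dotrv (R : realType) (n : nat) (p q : 'rV[R]_n) : R :=
  \sum_(i < n) p ord0 i * q ord0 i.

(* Hamiltonian H(t,x,p) = max_{u in U} <-p, f(t,x,u)> (written as a sup;
   under the standing assumptions the sup is attained). *)
Definition hamiltonian (R : realType) (n m : nat)
  (f : R -> 'rV[R]_n -> 'rV[R]_m -> 'rV[R]_n) (U : set 'rV[R]_m)
  (t : R) (x : 'rV[R]_n) (p : 'rV[R]_n) : R :=
  sup [set dotrv (- p) (f t x u) | u in U].

Definition dtime (R : realType) (n : nat) (xi : R * 'rV[R]_n -> R) (z : R * 'rV[R]_n) : R :=
  'D_((1 : R), (0 : 'rV[R]_n)) xi z.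

Definition grad (R : realType) (n : nat) (xi : R * 'rV[R]_n -> R) (z : R * 'rV[R]_n) : 'rV[R]_n :=
  \row_(i < n) 'D_((0 : R), (delta_mx ord0 i : 'rV[R]_n)) xi z.

Definition C1_on (R : realType) (n : nat) (Om : set (R * 'rV[R]_n))
  (xi : R * 'rV[R]_n -> R) : Prop :=
  (forall z, Om z -> differentiable xi z) /\
  (forall v : R * 'rV[R]_n, {within Om, continuous (fun z => 'd xi z v)}).

Definition loc_min (R : realType) (n : nat) (g : R * 'rV[R]_n -> R) (z0 : R * 'rV[R]_n) : Prop :=
  \forall z \near z0, g z0 <= g z.

Definition visc_super (R : realType) (n m : nat)
  (f : R -> 'rV[R]_n -> 'rV[R]_m -> 'rV[R]_n) (U : set 'rV[R]_m)
  (Om : set (R * 'rV[R]_n)) (v : R * 'rV[R]_n -> R) : Prop :=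
  forall (xi : R * 'rV[R]_n -> R) (z0 : R * 'rV[R]_n),
    C1_on Om xi -> Om z0 -> loc_min (fun z => v z - xi z) z0 ->
    0 <= - dtime xi z0 + hamiltonian f U z0.1 z0.2 (grad xi z0).

Definition closed_strip (R : realType) (n : nat) (T : R) : set (R * 'rV[R]_n) :=
  [set z | 0 <= z.1 <= T].
Definition open_strip (R : realType) (n : nat) (T : R) : set (R * 'rV[R]_n) :=
  [set z | 0 < z.1 < T].

Definition cont_strip (R : realType) (n : nat) (T : R) (v : R * 'rV[R]_n -> R) : Prop :=
  {within @closed_strip R n T, continuous v}.

(* Main.v *)
Require Import Defs.
From HB Require Import structures.
From mathcomp Require Import all_boot all_order all_algebra.
From mathcomp Require Import all_classical all_reals all_analysis.
Import Order.TTheory GRing.Theory Num.Theory.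
Import numFieldNormedType.Exports.
Local Open Scope classical_set_scope.
Local Open Scope ring_scope.
Lemma D_at_max (R : realType) (V : normedModType R) (g : V -> R) z v :
  derivable g z v -> (\forall y \near z, g y <= g z) -> 'D_v g z = 0.
Proof.
move=> dg gmax.
have near0 : \forall h \near (0:R), g (h *: v + z) <= g z.
  have c : (h *: v + z) @[h --> (0:R)] --> 0 *: v + z.
    apply: cvgD; [apply: cvgZr_tmp; exact: cvg_id | exact: cvg_cst].
  rewrite scale0r add0r in c.
  exact: c _ gmax.
have E : forall h : R, (g \o shift z) (h *: v) = g (h *: v + z) by [].
apply/eqP; rewrite eq_le; apply/andP; split.
  rewrite /derive cvg_at_rightE //; apply: limr_le.
    rewrite -cvg_at_rightE //.
    apply: cvg_trans dg; apply: cvg_app.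
    move=> A [e egt0 Ae]; exists e => // x xe xgt0; apply: Ae => //.
    exact/lt0r_neq0.
  near=> h; apply: mulr_ge0_le0.
    by rewrite invr_ge0; apply: ltW; near: h; exists 1 => /=.
  rewrite subr_le0 E; near: h; case: near0 => e e0 He; exists e => // y ye _; exact: He.
rewrite /derive cvg_at_leftE //; apply: limr_ge.
  rewrite -cvg_at_leftE //.
  apply: cvg_trans dg; apply: cvg_app.
  move=> A [e egt0 Ae]; exists e => // x xe xgt0; apply: Ae => //.
  exact/ltr0_neq0.
near=> h; apply: mulr_le0.
  by rewrite invr_le0; apply: ltW; near: h; exists 1 => /=.
rewrite subr_le0 E; near: h; case: near0 => e e0 He; exists e => // y ye _; exact: He.
Unshelve. all: by end_near. Qed.

Theorem lemma5 (R : realType) (n m : nat) (T : R)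
  (U : set 'rV[R]_m) (f : R -> 'rV[R]_n -> 'rV[R]_m -> 'rV[R]_n)
  (vbar : R * 'rV[R]_n -> R) :
  0 < T ->
  compact U -> U !=set0 ->
  {within [set q : R * 'rV[R]_n * 'rV[R]_m | 0 <= q.1.1 <= T /\ U q.2],
     continuous (fun q => f q.1.1 q.1.2 q.2)} ->
  (exists L : R, forall s x y u, 0 <= s <= T -> U u ->
     `|f s x u - f s y u| <= L * `|x - y|) ->
  cont_strip T vbar ->
  visc_super f U [set z | @open_strip R n T z /\ vbar z < 0] vbar ->
  let vx := fun z => Num.min (vbar z) 0 in
  [/\ cont_strip T vx,
      visc_super f U (@open_strip R n T) vx
    & forall x : 'rV[R]_n, vx (T, x) = Num.min (vbar (T, x)) 0].
Proof.
move=> T0 cU U0 fc fL vc vs vx; split => //.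
  move=> z; apply: (@continuous_min _ (subspace (closed_strip T)) vbar (fun=> 0) z); first exact: vc.
  exact: cst_continuous.
move=> xi z0 [xd xc] Oz lm.
case: (ltP (vbar z0) 0) => hv.
  apply: vs => //.
    split; first by move=> z [Oz' _]; exact: xd.
    move=> w; apply: continuous_subspaceW (xc w); by move=> z [].
  rewrite /loc_min; near=> z.
  have : vx z0 - xi z0 <= vx z - xi z by near: z; exact: lm.
  rewrite /vx (min_l (ltW hv)) => h; apply: le_trans h _.
  by rewrite lerD2r ge_min lexx.
have lmax : \forall z \near z0, xi z <= xi z0.
  near=> z.
  have : vx z0 - xi z0 <= vx z - xi z by near: z; exact: lm.
  rewrite /vx (min_r hv) add0r => h.
  have h2 : Num.min (vbar z) 0 <= 0 by rewrite ge_min lexx orbT.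
  rewrite -lerN2; apply: le_trans h _; by rewrite -[X in _ <= X]add0r lerD2r.
have dx := xd z0 Oz.
have Dt : dtime xi z0 = 0 by apply: D_at_max => //; exact: diff_derivable.
have Dg : grad xi z0 = 0.
  by apply/rowP => i; rewrite !mxE; apply: D_at_max => //; exact: diff_derivable.
rewrite Dt Dg /hamiltonian.
have -> : [set dotrv (- 0) (f z0.1 z0.2 u) | u in U] = [set 0 : R].
  apply/seteqP; split => x /=.
    by case=> u Uu <-; rewrite oppr0 /dotrv big1 // => i _; rewrite mxE mul0r.
  move=> ->; case: U0 => u Uu; exists u => //.
  by rewrite oppr0 /dotrv big1 // => i _; rewrite mxE mul0r.
by rewrite sup1 oppr0 add0r.
Unshelve. all: by end_near. Qed.
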